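(* Let $G$ be a graph without isolated vertices and $T$ a solution counting decision tree for $\varphi(G)$. Let $u$ be a node of $T$ labelled by a variable $x$ that is not forced to $1$ by $A_u$. Then the weight of the outgoing edge of $u$ labelled $\neg x$ is between $(1/2)^{|N^u(x)|+1}$ and $1/2$, and the weight of the outgoing edge of $u$ labelled $x$ is between $1/2$ and $1-(1/2)^{|N^u(x)|+1}$.
   Context: $\varphi(G)$ is the CNF on variables $V(G)$ with clauses $(u\vee v)$ for $\{u,v\}\in E(G)$. Boolean functions are identified with their sets of satisfying assignments (sets of literals); $F|_S$ is the function on the remaining variables whose satisfying assignments are the $S'$ with $S\cup S'$ satisfying $F$; $|\cdot|$ counts satisfying assignments. Decision tree for $F$ (not constant false): root labelled by some $x\in Var(F)$; for each literal $\ell\in\{x,\neg x\}$ occurring in some satisfying assignment, an outgoing edge labelled $\ell$ whose head is a leaf if $|Var(F)|=1$ and otherwise the root of a decision tree for $F|_\ell$. A solution counting decision tree additionally gives the edge leaving node $w$ with label $\ell$ the weight $|F|_{A_w\cup\{\ell\}}|/|F|_{A_w}|$, where $A_w$ is the set of literals labelling the root-$w$ path. A variable $y$ is forced to $1$ by $A_u$ if some neighbour $z$ of $y$ in $G$ has $\neg z\in A_u$. $N^u(y)$ is the set of neighbours $z$ of $y$ that do not occur in $A_u$ and are not forced to $1$ by $A_u$. *)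

(* Defs.v *)
From mathcomp Require Import all_boot all_order all_algebra.
Set Implicit Arguments. Unset Strict Implicit. Unset Printing Implicit Defensive.
Import GRing.Theory Num.Theory.

Section Defs.
Variable V : finType.

(* A literal (v, b) means "variable v has value b": (v,true) = v, (v,false) = ~v. *)
Definition lit := (V * bool)%type.

Definition sat_phi (e : rel V) (s : {ffun V -> bool}) : bool :=
  [forall u, forall v, e u v ==> (s u || s v)].

(* |phi(G)|_A| : number of satisfying assignments of the restriction to the
   literal set A, i.e. total satisfying assignments of phi(G) extending A. *)
Definition cnt (e : rel V) (A : seq lit) : nat :=
  #|[set s : {ffun V -> bool} | sat_phi e s && all (fun l => s l.1 == l.2) A]|.

Definition vars (A : seq lit) : seq V := map fst A.

Definition nrem (A : seq lit) : nat := #|[set v : V | v \notin vars A]|.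

(* Decision trees: a node carries its variable, the child along the edge
   labelled ~x and the child along the edge labelled x (None = no edge). *)
Inductive dtree : Type :=
| Leaf
| Node of V & option dtree & option dtree.

Definition child (c0 c1 : option dtree) (b : bool) : option dtree :=
  if b then c1 else c0.

(* dt_wf e A t : t is a decision tree for phi(G)|_A, where A is the set of
   literals labelling the root-path (listed from the root). *)
Fixpoint dt_wf (e : rel V) (A : seq lit) (t : dtree) : Prop :=
  match t with
  | Leaf => False
  | Node x c0 c1 =>
      0 < cnt e A /\ x \notin vars A /\
      (forall b : bool,
         match child c0 c1 b with
         | None => cnt e (rcons A (x, b)) = 0
         | Some t' => 0 < cnt e (rcons A (x, b)) /\
             (if nrem A == 1 then t' = Leaf
              else dt_wf e (rcons A (x, b)) t')
         end)
  end.

(* at_node t P x : following path P (literals, from the root) in t reaches an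
   internal node labelled by x; then A_u = P. *)
Fixpoint at_node (t : dtree) (P : seq lit) (x : V) : Prop :=
  match P with
  | [::] => exists c0 c1, t = Node x c0 c1
  | (y, b) :: P' => exists c0 c1 t', t = Node y c0 c1 /\
       child c0 c1 b = Some t' /\ at_node t' P' x
  end.

Definition weight (e : rel V) (A : seq lit) (l : lit) : rat :=
  (cnt e (rcons A l))%:R / (cnt e A)%:R.

Definition forced1 (e : rel V) (A : seq lit) (y : V) : bool :=
  [exists z, e y z && ((z, false) \in A)].

Definition Nu (e : rel V) (A : seq lit) (y : V) : {set V} :=
  [set z | e y z & (z \notin vars A) && ~~ forced1 e A z].

End Defs.

(* Main.v *)
Require Import Defs.
From mathcomp Require Import all_boot all_order all_algebra.
From mathcomp Require Import lra zify.
Import GRing.Theory Num.Theory.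

Lemma at_leaf (V : finType) P (x : V) : ~ at_node (Leaf V) P x.
Proof. by case: P => [|[y b] P] /=; [case=> ? [] | case=> ? [] ? [] ? []]. Qed.

Lemma at_node_wf (V : finType) (e : rel V) P : forall (t : dtree V) B x,
  dt_wf e B t -> at_node t P x -> 0 < cnt e (B ++ P) /\ x \notin vars (B ++ P).
Proof.
elim: P => [|[y b] P IH] t B x /=.
  by move=> Hw [c0 [c1 Ht]]; subst t; rewrite cats0; case: Hw => [? [? _]].
move=> Hw [c0 [c1 [t' [Ht [Hc Ha]]]]]; subst t.
case: Hw => [_ [_ /(_ b)]]; rewrite Hc => -[_].
case: (nrem B == 1) => [Ht'|Hw]; first by subst t'; case: (@at_leaf V P x Ha).
by rewrite -cat_rcons; apply: IH Hw Ha.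
Qed.
Module M2.
Set Implicit Arguments. Unset Strict Implicit.

Section C.
Variables (V : finType) (e : rel V) (A : seq (lit V)) (x : V).

Definition SS (B : seq (lit V)) := [set s : {ffun V -> bool} | sat_phi e s && all (fun l => s l.1 == l.2) B].

Lemma SS_rcons b : SS (rcons A (x, b)) = SS A :&: [set s : {ffun V -> bool} | s x == b].
Proof.
apply/setP => s; rewrite !inE all_rcons /=.
by case: (sat_phi _ _); case: (s x == b); case: all.
Qed.

Lemma cnt_split : cnt e A = (cnt e (rcons A (x, false)) + cnt e (rcons A (x, true)))%N.
Proof.
rewrite /cnt -!/(SS _) !SS_rcons -(cardsID [set s : {ffun V -> bool} | s x] (SS A)) addnC.
by congr (_ + _)%N; apply: eq_card => s; rewrite !inE; case: (s x); rewrite ?andbT ?andbF.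
Qed.

Definition flip1 (s : {ffun V -> bool}) : {ffun V -> bool} :=
  [ffun v => if v == x then true else s v].

Lemma le01 : x \notin vars A -> (cnt e (rcons A (x, false)) <= cnt e (rcons A (x, true)))%N.
Proof.
move=> HxA; rewrite /cnt -!/(SS _).
rewrite -(@card_in_imset _ _ flip1); last first.
  move=> s t; rewrite !SS_rcons !inE => /andP[_ /eqP Hs] /andP[_ /eqP Ht] Hst.
  apply/ffunP => v; have := congr1 (fun f : {ffun V -> bool} => f v) Hst; rewrite !ffunE.
  by case: eqP => [->|]; rewrite ?Hs ?Ht.
apply: subset_leq_card; apply/subsetP => _ /imsetP[s Hs ->].
move: Hs; rewrite !inE all_rcons /= => /andP[Hsat /andP[_ Hall]].
rewrite all_rcons /flip1 ffunE eqxx /=.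
apply/andP; split.
  apply/forallP => u; apply/forallP => v; apply/implyP => Huv.
  move/forallP: Hsat => /(_ u) /forallP /(_ v) /implyP /(_ Huv).
  by rewrite !ffunE; do 2 case: eqP => _ //=; rewrite ?orbT.
apply/allP => l Hl; move/allP: Hall => /(_ l Hl).
rewrite ffunE; case: (l.1 =P x) => [Hlx|//]; exfalso.
by move/negP: HxA; apply; apply/mapP; exists l.
Qed.
End C.
End M2.
Import M2.
Module M3.
Set Implicit Arguments. Unset Strict Implicit.

Section D.
Variables (V : finType) (e : rel V) (A : seq (lit V)) (x : V).
Hypothesis e_sym : symmetric e.
Hypothesis e_irr : irreflexive e.
Hypothesis HxA : x \notin vars A.
Hypothesis Hx : ~~ forced1 e A x.

Definition f0 (s : {ffun V -> bool}) : {ffun V -> bool} :=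
  [ffun v => if v == x then false else if e x v then true else s v].

Definition g0 (s : {ffun V -> bool}) := (f0 s, [set z in Nu e A x | s z]).

Lemma HAt z b : (z, b) \in A -> e x z -> b.
Proof.
case: b => // Hz Hxz; move/negP: Hx; case; apply/existsP; exists z; by rewrite Hxz Hz.
Qed.

Lemma notx l : l \in A -> l.1 != x.
Proof. move=> Hl; apply/eqP => Hlx; move/negP: HxA; apply; apply/mapP; by exists l. Qed.

Lemma Hdet s : s \in SS e (rcons A (x, true)) -> forall v, e x v -> v \notin Nu e A x -> s v.
Proof.
rewrite inE all_rcons => /andP[Hsat /andP[_ Hall]] v Hxv.
rewrite inE Hxv /= negb_and !negbK => /orP[/mapP[l Hl Hv]|].
  subst v; move/allP: Hall => /(_ l Hl) /eqP ->; case: l Hl Hxv => z b Hl Hxv /=; exact: HAt Hl Hxv.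
move/existsP=> [z /andP[Hvz Hz]].
move/allP: Hall => /(_ _ Hz) /= /eqP Hsz.
move/forallP: Hsat => /(_ v) /forallP /(_ z) /implyP /(_ Hvz).
by rewrite Hsz orbF.
Qed.

Lemma le10 : (cnt e (rcons A (x, true)) <= 2 ^ #|Nu e A x| * cnt e (rcons A (x, false)))%N.
Proof.
rewrite /cnt -!/(SS _ _).
rewrite -(@card_in_imset _ _ g0); last first.
  move=> s t Hs Ht [Hf HN]; apply/ffunP => v.
  have Hsx : s x by move: Hs; rewrite inE all_rcons /= => /andP[_ /andP[/eqP]].
  have Htx : t x by move: Ht; rewrite inE all_rcons /= => /andP[_ /andP[/eqP]].
  case: (v =P x) => [->|Hvx]; first by rewrite Hsx Htx.
  case Hxv: (e x v); last first.
    have := congr1 (fun f : {ffun V -> bool} => f v) Hf; rewrite !ffunE Hxv.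
    by case: eqP.
  case HvN: (v \in Nu e A x); last first.
    by rewrite (Hdet Hs Hxv) ?HvN ?(Hdet Ht Hxv) ?HvN.
  have := congr1 (fun S : {set V} => v \in S) HN; rewrite /= !inE; move: HvN; by rewrite inE => ->.
rewrite mulnC -card_powerset -cardsX.
apply: subset_leq_card; apply/subsetP => _ /imsetP[s Hs ->].
rewrite inE /=; apply/andP; split; last first.
  by rewrite inE; apply/subsetP => z; rewrite inE => /andP[].
move: Hs; rewrite !inE all_rcons /= => /andP[Hsat /andP[_ Hall]].
rewrite all_rcons /f0 ffunE eqxx /=.
apply/andP; split.
  apply/forallP => u; apply/forallP => v; apply/implyP => Huv.
  move/forallP: Hsat => /(_ u) /forallP /(_ v) /implyP /(_ Huv) Hs.
  rewrite !ffunE.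
  case: (u =P x) => [Hu|Hu]; case: (v =P x) => [Hv|Hv]; subst => /=.
  - by rewrite e_irr in Huv.
  - by rewrite Huv.
  - by rewrite e_sym Huv.
  - by case: (e x u); case: (e x v); rewrite ?orbT.
apply/allP => l Hl; move/allP: Hall => /(_ l Hl).
rewrite ffunE (negbTE (notx Hl)).
case Hxl: (e x l.1) => //= _; case: l Hl Hxl => z b Hl Hxl /=.
by rewrite (HAt Hl Hxl).
Qed.
End D.
End M3.
Import M3.
Local Open Scope ring_scope.

Theorem lemma11 (V : finType) (e : rel V)
  (e_sym : symmetric e) (e_irr : irreflexive e)
  (no_isolated : forall v : V, exists w : V, e v w)
  (T : dtree V) (HT : dt_wf e [::] T)
  (A : seq (lit V)) (x : V) (Hu : at_node T A x)
  (Hx : ~~ forced1 e A x) :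
  ((1 / 2) ^+ (#|Nu e A x|.+1) <= weight e A (x, false) <= 1 / 2) /\
  (1 / 2 <= weight e A (x, true) <= 1 - (1 / 2) ^+ (#|Nu e A x|.+1)).
Proof.
have [Hpos HxA] := @at_node_wf V e A T [::] x HT Hu.
rewrite /= in Hpos HxA.
have Hs := cnt_split e A x.
have H01 := le01 e HxA.
have H10 := le10 e_sym e_irr HxA Hx.
rewrite /weight Hs.
move: H01 H10 Hpos; rewrite Hs.
set c0 := cnt e (rcons A (x, false)); set c1 := cnt e (rcons A (x, true)).
set n := #|Nu e A x| => H01 H10 Hpos.
have HK : (1 / 2 : rat) ^+ n.+1 = ((2 ^ n.+1)%N%:R)^-1.
  by rewrite natrX -exprVn div1r.
have HN : (0 : rat) < (c0 + c1)%N%:R by rewrite ltr0n.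
have Hlow : (1 / 2 : rat) ^+ n.+1 <= c0%:R / (c0 + c1)%N%:R.
  rewrite HK ler_pdivlMr // mulrC ler_pdivrMr ?ltr0n ?expn_gt0 // -natrM ler_nat.
  have := expn_gt0 2 n; rewrite expnS; lia.
have Hup : (c0%:R / (c0 + c1)%N%:R : rat) <= 1 / 2.
  rewrite ler_pdivrMr // natrD.
  have : (c0%:R : rat) <= c1%:R by rewrite ler_nat.
  lra.
have H1 : (c1%:R / (c0 + c1)%N%:R : rat) = 1 - c0%:R / (c0 + c1)%N%:R.
  apply: (@mulIf _ (c0 + c1)%N%:R); first by rewrite lt0r_neq0.
  rewrite mulrBl mul1r !mulfVK ?lt0r_neq0 // natrD; lra.
rewrite H1 Hlow Hup; split => //.
apply/andP; split; lra.
Qed.
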